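(* Let $D$ be a square-free integer with $D\equiv 2\pmod 4$, let $\mathbb{Z}[\sqrt{D}]=\{x+y\sqrt D: x,y\in\mathbb{Z}\}$, and suppose that $2$ is irreducible but not prime in $\mathbb{Z}[\sqrt{D}]$. Let $z=z_1+z_2\sqrt{D}\in I_2(D)$ with $\lVert z\rVert=2k$ for some integer $k\equiv 3\pmod 4$. Then $A(2,z)$ has property (CZ) if and only if the quadratic Diophantine equation $$0=(2+k)b_1^2-(2+k)Db_2^2-2z_1b_1+2z_2Db_2-2$$ has an integer solution $(b_1,b_2)$.
   Context: $\bar z=z_1-z_2\sqrt D$ is the conjugate and $\lVert z\rVert=z\bar z=z_1^2-Dz_2^2$ the norm. $I_2(D)$ is the set of all non-unit $z\in\mathbb{Z}[\sqrt{D}]$ such that $z\notin\langle 2\rangle$ but there exists $m\notin\langle 2\rangle$ with $zm\in\langle 2\rangle$. $A(2,z)=\begin{pmatrix} 2 & z\\ \bar z & \lVert z\rVert/2\end{pmatrix}$. A matrix $A(p,z)$ has property (CZ) if there exist $a,b,c\in\mathbb{Z}[\sqrt{D}]$ with $a(1-a)=bc$ such that $A(p,z)=\begin{pmatrix} a&b\\ c&1-a\end{pmatrix}\begin{pmatrix}\bar a&\bar c\\ \bar b&1-\bar a\end{pmatrix}$. *)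

(* Defs.v *)
From mathcomp Require Import all_boot all_order all_algebra.
Set Implicit Arguments. Unset Strict Implicit. Unset Printing Implicit Defensive.
Import Order.TTheory GRing.Theory Num.Theory.
Local Open Scope ring_scope.

(* elements of Z[sqrt D] : z = z.1 + z.2 sqrt D *)
Definition zsqrt := (int * int)%type.

Definition zs (a : int) : zsqrt := (a, 0).
Definition zadd (x y : zsqrt) : zsqrt := (x.1 + y.1, x.2 + y.2).
Definition zopp (x : zsqrt) : zsqrt := (- x.1, - x.2).
Definition zsub (x y : zsqrt) : zsqrt := zadd x (zopp y).
Definition zmul (D : int) (x y : zsqrt) : zsqrt :=
  (x.1 * y.1 + D * x.2 * y.2, x.1 * y.2 + x.2 * y.1).
Definition zconj (x : zsqrt) : zsqrt := (x.1, - x.2).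
Definition znorm (D : int) (x : zsqrt) : int := x.1 ^+ 2 - D * x.2 ^+ 2.

Definition zunit (D : int) (x : zsqrt) : Prop := exists w, zmul D x w = zs 1.
Definition zdvd (D : int) (x y : zsqrt) : Prop := exists w, y = zmul D x w.
Definition in_ideal2 (D : int) (x : zsqrt) : Prop := zdvd D (zs 2) x.

Definition zirreducible (D : int) (p : zsqrt) : Prop :=
  p <> zs 0 /\ ~ zunit D p /\
  forall x y, p = zmul D x y -> zunit D x \/ zunit D y.
Definition zprime (D : int) (p : zsqrt) : Prop :=
  p <> zs 0 /\ ~ zunit D p /\
  forall x y, zdvd D p (zmul D x y) -> zdvd D p x \/ zdvd D p y.

Definition squarefree (D : int) : Prop :=
  forall n : nat, (n ^ 2 %| `|D|)%N -> n = 1%N.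

Definition I2 (D : int) (z : zsqrt) : Prop :=
  ~ zunit D z /\ ~ in_ideal2 D z /\
  exists m, ~ in_ideal2 D m /\ in_ideal2 D (zmul D z m).

(* 2x2 matrices over Z[sqrt D], given by their entries (m11, m12, m21, m22) *)
Definition mat2 := (zsqrt * zsqrt * zsqrt * zsqrt)%type.
Definition mk2 (a b c d : zsqrt) : mat2 := (a, b, c, d).
Definition mmul2 (D : int) (M N : mat2) : mat2 :=
  let: (a, b, c, d) := M in let: (e, f, g, h) := N in
  mk2 (zadd (zmul D a e) (zmul D b g)) (zadd (zmul D a f) (zmul D b h))
      (zadd (zmul D c e) (zmul D d g)) (zadd (zmul D c f) (zmul D d h)).

Definition A2 (D : int) (z : zsqrt) : mat2 :=
  mk2 (zs 2) z (zconj z) (zs (znorm D z %/ 2)%Z).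

Definition CZ (D : int) (A : mat2) : Prop :=
  exists a b c : zsqrt,
    zmul D a (zsub (zs 1) a) = zmul D b c /\
    A = mmul2 D (mk2 a b c (zsub (zs 1) a))
                (mk2 (zconj a) (zconj c) (zconj b) (zsub (zs 1) (zconj a))).

(* Main.v *)
From HB Require Import structures.
Require Import Defs.
From mathcomp Require Import all_boot all_order all_algebra.
From mathcomp Require Import ring zify.
Import Order.TTheory GRing.Theory Num.Theory.
Local Open Scope ring_scope.

Definition zq (D : int) : Type := (int * int)%type.
Section ZQ.
Variable D : int.
HB.instance Definition _ := Choice.copy (zq D) (int * int)%type.
Lemma zaddA : associative (zadd : zq D -> zq D -> zq D).
Proof. by case=> ??[??][??]; rewrite /zadd /= !addrA. Qed.
Lemma zaddC : commutative (zadd : zq D -> zq D -> zq D).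
Proof. by case=> ??[??]; rewrite /zadd /=; congr pair; apply: addrC. Qed.
Lemma zadd0 : left_id (zs 0 : zq D) zadd.
Proof. by case=> ??; rewrite /zadd /= !add0r. Qed.
Lemma zaddN : left_inverse (zs 0 : zq D) zopp zadd.
Proof. by case=> ??; rewrite /zadd /= !addNr. Qed.
HB.instance Definition _ := GRing.isZmodule.Build (zq D) zaddA zaddC zadd0 zaddN.
Lemma zmulA : associative (zmul D : zq D -> zq D -> zq D).
Proof. by case=> ??[??][??]; rewrite /zmul /=; congr pair; ring. Qed.
Lemma zmulC : commutative (zmul D : zq D -> zq D -> zq D).
Proof. by case=> ??[??]; rewrite /zmul /=; congr pair; ring. Qed.
Lemma zmul1 : left_id (zs 1 : zq D) (zmul D).
Proof. by case=> ??; rewrite /zmul /=; congr pair; ring. Qed.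
Lemma zmulDl : left_distributive (zmul D : zq D -> zq D -> zq D) zadd.
Proof. by case=> ??[??][??]; rewrite /zmul /zadd /=; congr pair; ring. Qed.
Lemma zone : (zs 1 : zq D) != zs 0.
Proof. by []. Qed.
HB.instance Definition _ := GRing.Zmodule_isComNzRing.Build (zq D) zmulA zmulC zmul1 zmulDl zone.
End ZQ.


Lemma par_ex (x : int) : exists y, x = 2*y \/ x = 2*y+1.
Proof. exists (x %/ 2)%Z; lia. Qed.
Lemma parG1 (x e1 e2 : int) : e1 = e2 -> e1 - e2 = 2*x+1 -> False.
Proof. lia. Qed.
Lemma parG2 (x e1 e2 : int) : e1 = e2 -> e1 - e2 = 4*x+2 -> False.
Proof. lia. Qed.

Lemma cancel2 D (x : zq D) : 2 * x = 0 -> x = 0.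
Proof.
case: x => x1 x2 /= [h1 h2].
have e1 : x1 = 0 by lia.
have e2 : x2 = 0 by lia.
by rewrite e1 e2.
Qed.

Lemma conjM D (x y : zq D) : zconj (x * y) = (zconj x : zq D) * zconj y.
Proof. case: x y => x1 x2 [y1 y2] /=; rewrite /zconj /=; congr pair; rewrite /=; ring. Qed.
Lemma conjB D (x y : zq D) : zconj (x - y) = (zconj x : zq D) - zconj y.
Proof. case: x y => x1 x2 [y1 y2] /=; rewrite /zconj /=; congr pair; rewrite /=; ring. Qed.
Lemma conj1 D : (zconj (1 : zq D) : zq D) = 1.
Proof. by rewrite /zconj /= oppr0. Qed.

Lemma zzbar D (z : zsqrt) k : znorm D z = 2 * k -> (z : zq D) * (zconj z : zq D) = (2 : zq D) * (zs k : zq D).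
Proof.
case: z => z1 z2; rewrite /znorm /= => h; congr pair.
  rewrite /= -[RHS]/(2 * k + D * 0 * 0) -h; ring.
rewrite /= -[RHS]/(2 * 0 + 0 * k); ring.
Qed.

Section Abs.
Variable R : comRingType.
Hypothesis canc : forall x : R, 2 * x = 0 -> x = 0.

Lemma canc' (x y : R) : 2 * x = 2 * y -> x = y.
Proof. move=> h; apply/eqP; rewrite -subr_eq0; apply/eqP/canc; rewrite mulrBr h; ring. Qed.
Lemma canc4 (x : R) : 4 * x = 0 -> x = 0.
Proof. move=> h; apply: canc; apply: canc; rewrite -h; ring. Qed.

Lemma fwd (a ab b bb c cb z zb k : R) :
  a * (1 - a) = b * c -> ab * (1 - ab) = bb * cb ->
  2 = a * ab + b * bb -> z = a * cb + b * (1 - ab) -> zb = c * ab + (1 - a) * bb ->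
  z * zb = 2 * k ->
  (2 + k) * (b * bb) - (b * zb + bb * z) - 2 = 0.
Proof.
move=> Hb Hb' e11 e12 e21 zz.
have E0 : a * ab + b * bb - 2 = 0 by rewrite -e11 subrr.
have F21 : zb - c * ab - (1 - a) * bb = 0 by rewrite e21; ring.
have F12 : z - a * cb - b * (1 - ab) = 0 by rewrite e12; ring.
have H0 : a * (1 - a) - b * c = 0 by rewrite Hb subrr.
have H0' : ab * (1 - ab) - bb * cb = 0 by rewrite Hb' subrr.
have S1 : 2 * a + b * zb - 2 = 0.
  have -> : 2 * a + b * zb - 2 = -(a * ab + b * bb - 2) * a + b * (zb - c * ab - (1 - a) * bb)
        + (a * ab + b * bb - 2) - ab * (a * (1 - a) - b * c) by ring.
  by rewrite E0 F21 H0; ring.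
have S1' : 2 * ab + bb * z - 2 = 0.
  have -> : 2 * ab + bb * z - 2 = -(a * ab + b * bb - 2) * ab + bb * (z - a * cb - b * (1 - ab))
        + (a * ab + b * bb - 2) - a * (ab * (1 - ab) - bb * cb) by ring.
  by rewrite E0 F12 H0'; ring.
have H3 : z * zb - 2 * k = 0 by rewrite zz subrr.
apply: canc.
have -> : 2 * ((2 + k) * (b * bb) - (b * zb + bb * z) - 2) =
   4 * (a * ab + b * bb - 2) - 2 * a * (2 * ab + bb * z - 2)
   - (2 * a + b * zb - 2) * (2 * ab - (2 * ab + bb * z - 2)) - b * bb * (z * zb - 2 * k) by ring.
by rewrite E0 S1 S1' H3; ring.
Qed.

Lemma back (a ab b bb c cb z zb k : R) :
  2 * a = 2 - b * zb -> 2 * ab = 2 - bb * z ->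
  2 * c = a * zb -> 2 * cb = ab * z -> z * zb = 2 * k ->
  (2 + k) * (b * bb) - (b * zb + bb * z) - 2 = 0 ->
  [/\ a * (1 - a) = b * c, 2 = a * ab + b * bb, z = a * cb + b * (1 - ab),
      zb = c * ab + (1 - a) * bb & k = c * cb + (1 - a) * (1 - ab)].
Proof.
move=> s1 s1' s2 s2' zz G.
have h1 : 2 * a - 2 + b * zb = 0 by rewrite s1; ring.
have h1' : 2 * ab - 2 + bb * z = 0 by rewrite s1'; ring.
have h2 : 2 * c - a * zb = 0 by rewrite s2; ring.
have h2' : 2 * cb - ab * z = 0 by rewrite s2'; ring.
have h3 : z * zb - 2 * k = 0 by rewrite zz; ring.
have E : a * ab + b * bb - 2 = 0.
  apply: canc4.
  have -> : 4 * (a * ab + b * bb - 2) = 2 * ab * (2 * a - 2 + b * zb)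
     + (2 - b * zb) * (2 * ab - 2 + bb * z) + b * bb * (z * zb - 2 * k)
     + 2 * ((2 + k) * (b * bb) - (b * zb + bb * z) - 2) by ring.
  by rewrite h1 h1' h3 G; ring.
split.
- apply/eqP; rewrite -subr_eq0; apply/eqP/canc4.
  have -> : 4 * (a * (1 - a) - b * c) = -(2 * a) * (2 * a - 2 + b * zb) - 2 * b * (2 * c - a * zb) by ring.
  by rewrite h1 h2; ring.
- by apply/eqP; rewrite eq_sym -subr_eq0 E.
- apply/eqP; rewrite eq_sym -subr_eq0; apply/eqP/canc.
  have -> : 2 * (a * cb + b * (1 - ab) - z) = a * (2 * cb - ab * z) - b * (2 * ab - 2 + bb * z)
      + z * (a * ab + b * bb - 2) by ring.
  by rewrite h2' h1' E; ring.
- apply/eqP; rewrite eq_sym -subr_eq0; apply/eqP/canc.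
  have -> : 2 * (c * ab + (1 - a) * bb - zb) = ab * (2 * c - a * zb) - bb * (2 * a - 2 + b * zb)
      + zb * (a * ab + b * bb - 2) by ring.
  by rewrite h2 h1 E; ring.
- apply/eqP; rewrite eq_sym -subr_eq0; apply/eqP/canc4.
  have -> : 4 * (c * cb + (1 - a) * (1 - ab) - k) =
     (2 * c - a * zb) * (2 * cb - ab * z) + ab * z * (2 * c - a * zb) + a * zb * (2 * cb - ab * z)
     - b * zb * (2 * ab - 2 + bb * z) - bb * z * (2 * a - 2 + b * zb)
     + (2 * a - 2 + b * zb) * (2 * ab - 2 + bb * z)
     + (z * zb - 2 * k) * (a * ab + b * bb - 2) + 2 * (z * zb - 2 * k) + 2 * k * (a * ab + b * bb - 2) by ring.
  by rewrite h1 h1' h2 h2' h3 E; ring.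
Qed.
End Abs.

Lemma pair_ext (x y : zsqrt) : x.1 = y.1 -> x.2 = y.2 -> x = y.
Proof. by case: x y => ?? [??] /= -> ->. Qed.

Theorem corollary3p3 (D : int) (z : zsqrt) (k : int) :
  squarefree D -> (D %% 4)%Z = 2 ->
  zirreducible D (zs 2) -> ~ zprime D (zs 2) ->
  I2 D z -> znorm D z = 2 * k -> (k %% 4)%Z = 3 ->
  (CZ D (A2 D z) <->
   exists b1 b2 : int,
     0 = (2 + k) * b1 ^+ 2 - (2 + k) * D * b2 ^+ 2 - 2 * z.1 * b1
         + 2 * z.2 * D * b2 - 2).
Proof.
move=> _ HD _ _ _ Hn Hk; split.
- case=> a [b [c [Hbc HA]]].
  have E11 : (2 : zq D) = (a : zq D) * (zconj a : zq D) + (b : zq D) * (zconj b : zq D)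
    := congr1 (fun M : mat2 => M.1.1.1) HA.
  have E12 : (z : zq D) = (a : zq D) * (zconj c : zq D) + (b : zq D) * (1 - (zconj a : zq D))
    := congr1 (fun M : mat2 => M.1.1.2) HA.
  have E21 : (zconj z : zq D) = (c : zq D) * (zconj a : zq D) + (1 - (a : zq D)) * (zconj b : zq D)
    := congr1 (fun M : mat2 => M.1.2) HA.
  have Hbc1 : (a : zq D) * (1 - (a : zq D)) = (b : zq D) * (c : zq D) := Hbc.
  have Hbc2 : (zconj a : zq D) * (1 - (zconj a : zq D)) = (zconj b : zq D) * (zconj c : zq D).
    by rewrite -conj1 -conjB -!conjM Hbc1.
  have G := @fwd (zq D) (@cancel2 D) a (zconj a) b (zconj b) c (zconj c) z (zconj z) (zs k)
     Hbc1 Hbc2 E11 E12 E21 (@zzbar _ _ _ Hn).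
  exists b.1, b.2.
  move: G => /(congr1 fst) /= G.
  apply: (etrans (esym G)); ring.
- case=> b1 [b2 He].
  case: z Hn He => z1 z2 Hn /= He.
  have Hn' : z1 ^+ 2 - D * z2 ^+ 2 = 2 * k := Hn.
  have [p Dp] : exists p, D = 4 * p + 2 by exists (D %/ 4)%Z; lia.
  have [q kq] : exists q, k = 4 * q + 3 by exists (k %/ 4)%Z; lia.
  have [w [z1e|z1e]] := par_ex z1; last first.
    exfalso; apply: (@parG1 (2 * w ^+ 2 + 2 * w - (2 * p + 1) * z2 ^+ 2 - k) _ _ Hn').
    rewrite z1e Dp; ring.
  have [n [z2e|z2e]] := par_ex z2.
    exfalso; apply: (@parG2 (w ^+ 2 - 2 * (2 * p + 1) * n ^+ 2 - 2 * q - 2) _ _ Hn').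
    rewrite z1e z2e Dp kq; ring.
  have [be [b1e|b1e]] := par_ex b1; last first.
    exfalso; apply: (@parG1 ((4 * q + 5) * (2 * be ^+ 2 + 2 * be) + 2 * q + 2
       - (4 * q + 5) * (2 * p + 1) * b2 ^+ 2 - 2 * w * (2 * be + 1) + 2 * (2 * n + 1) * (2 * p + 1) * b2 - 1)
       _ _ (esym He)).
    rewrite z1e z2e Dp kq b1e; ring.
  have [m [b2e|b2e]] := par_ex b2.
    exfalso; apply: (@parG2 ((4 * q + 5) * be ^+ 2 - 2 * (4 * q + 5) * (2 * p + 1) * m ^+ 2
       - 2 * w * be + 2 * (2 * n + 1) * (2 * p + 1) * m - 1) _ _ (esym He)).
    rewrite z1e z2e Dp kq b1e b2e; ring.
  subst z1 z2 D k b1 b2.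
  pose s := 2 * p * m + p + m.
  pose r := 2 * s * n + s + n.
  pose al := 1 - be * w + r.
  pose a2 := be * (2 * n + 1) - (2 * m + 1) * w.
  pose a : zsqrt := (2 * al, a2).
  pose c : zsqrt := (w * (2 * al) - (2 * p + 1) * a2 * (2 * n + 1), - al * (2 * n + 1) + w * a2).
  pose b : zsqrt := (2 * be, 2 * m + 1).
  pose z : zsqrt := (2 * w, 2 * n + 1).
  pose DD := 4 * p + 2.
  have s1 : (2 : zq DD) * (a : zq DD) = 2 - (b : zq DD) * (zconj z : zq DD).
    apply: pair_ext; rewrite /a /b /z /al /r /s /a2 /DD /=; ring.
  have s1' : (2 : zq DD) * (zconj a : zq DD) = 2 - (zconj b : zq DD) * (z : zq DD).
    apply: pair_ext; rewrite /a /b /z /al /r /s /a2 /DD /=; ring.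
  have s2 : (2 : zq DD) * (c : zq DD) = (a : zq DD) * (zconj z : zq DD).
    apply: pair_ext; rewrite /a /c /z /al /r /s /a2 /DD /=; ring.
  have s2' : (2 : zq DD) * (zconj c : zq DD) = (zconj a : zq DD) * (z : zq DD).
    apply: pair_ext; rewrite /a /c /z /al /r /s /a2 /DD /=; ring.
  have G : ((2 : zq DD) + (zs (4 * q + 3) : zq DD)) * ((b : zq DD) * (zconj b : zq DD))
     - ((b : zq DD) * (zconj z : zq DD) + (zconj b : zq DD) * (z : zq DD)) - 2 = 0.
    apply: pair_ext; rewrite /b /z /DD /=.
      apply: (etrans _ (esym He)); ring.
    ring.
  have [Hbc F11 F12 F21 F22] := @back (zq DD) (@cancel2 DD) a (zconj a) b (zconj b) c (zconj c) z (zconj z)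
     (zs (4 * q + 3)) s1 s1' s2 s2' (@zzbar _ _ _ Hn) G.
  exists a, b, c; split; first exact: Hbc.
  rewrite /A2 /mmul2 /mk2; congr (_, _, _, _).
  + exact: F11.
  + exact: F12.
  + exact: F21.
  + rewrite Hn mulKz //; exact: F22.
Qed.
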